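(* Let $n\ge2$. For any set $X\subset\mathbb{S}$ there exist $c\in\mathbb{R}^n$ and $k\in\mathbb{R}$ such that the spherical cap $\mathcal{C}_{c,k}=\{x\in\mathbb{S}:c^Tx>k\}$ satisfies $\mathcal{C}_{c,k}\subset X$ and $\Delta(\mathcal{C}_{c,k})=\Delta(X)$.
   Context: $\mathbb{S}$ and $\mathbb{B}$ are the Euclidean unit sphere and closed unit ball of $\mathbb{R}^n$. For $X\subset\mathbb{S}$, $\Delta(X)=\sup\{r\in[0,1]: r\mathbb{B}\subset\mathrm{conv}(\mathbb{S}\setminus X)\}$, with the supremum of the empty set taken as $0$. *)

(* Defs.v *)
From HB Require Import structures.
From mathcomp Require Import all_boot all_order all_algebra.
From mathcomp Require Import boolp classical_sets reals.
Set Implicit Arguments. Unset Strict Implicit. Unset Printing Implicit Defensive.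
Import Order.TTheory GRing.Theory Num.Theory.
Local Open Scope ring_scope.
Local Open Scope classical_set_scope.

Section Defs.
Variables (R : realType) (n : nat).

Definition dotp (x y : 'rV[R]_n) : R := \sum_(i < n) x 0 i * y 0 i.

Definition usphere : set 'rV[R]_n := [set x | dotp x x = 1].
Definition uball : set 'rV[R]_n := [set x | dotp x x <= 1].

Definition scaled_ball (r : R) : set 'rV[R]_n :=
  [set y | exists2 x, uball x & y = r *: x].

Definition conv (A : set 'rV[R]_n) : set 'rV[R]_n :=
  [set x | exists m (w : 'I_m -> R) (p : 'I_m -> 'rV[R]_n),
     [/\ forall i, 0 <= w i, \sum_(i < m) w i = 1, forall i, A (p i)
       & x = \sum_(i < m) w i *: p i]].

(* Delta(X) = sup { r in [0,1] : r B ⊂ conv(S \ X) }; sup set0 = 0 in reals.v *)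
Definition Delta (X : set 'rV[R]_n) : R :=
  sup [set r : R | 0 <= r <= 1 /\ scaled_ball r `<=` conv (usphere `\` X)].

Definition cap (c : 'rV[R]_n) (k : R) : set 'rV[R]_n :=
  [set x | usphere x /\ k < dotp c x].

End Defs.

(* Main.v *)
Require Import Defs.
From HB Require Import structures.
From mathcomp Require Import all_boot all_order all_algebra.
From mathcomp Require Import boolp classical_sets reals.
From mathcomp Require Import topology normedtype derive.
From mathcomp Require Import lra ring.
Import Order.TTheory GRing.Theory Num.Theory.
Import numFieldNormedType.Exports.
Local Open Scope ring_scope.
Local Open Scope classical_set_scope.
Set Implicit Arguments. Unset Strict Implicit.

Section Dot.
Variables (R : realType) (n : nat).
Implicit Types x y z : 'rV[R]_n.
Local Notation dp := (@dotp R n).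

Lemma dotpC x y : dp x y = dp y x.
Proof. by apply: eq_bigr => i _; rewrite mulrC. Qed.

Lemma dotpDl x y z : dp (x + y) z = dp x z + dp y z.
Proof. by rewrite /dotp -big_split; apply: eq_bigr => i _; rewrite mxE mulrDl. Qed.

Lemma dotpZl a x y : dp (a *: x) y = a * dp x y.
Proof. by rewrite /dotp mulr_sumr; apply: eq_bigr => i _; rewrite mxE mulrA. Qed.

Lemma dotpNl x y : dp (- x) y = - dp x y.
Proof. by rewrite /dotp -sumrN; apply: eq_bigr => i _; rewrite mxE mulNr. Qed.

Lemma dotpBl x y z : dp (x - y) z = dp x z - dp y z.
Proof. by rewrite dotpDl dotpNl. Qed.

Lemma dotpDr x y z : dp x (y + z) = dp x y + dp x z.
Proof. by rewrite dotpC dotpDl !(dotpC x). Qed.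
Lemma dotpZr a x y : dp x (a *: y) = a * dp x y.
Proof. by rewrite dotpC dotpZl dotpC. Qed.
Lemma dotpBr x y z : dp x (y - z) = dp x y - dp x z.
Proof. by rewrite dotpC dotpBl !(dotpC x). Qed.

Lemma dotp0l x : dp 0 x = 0.
Proof. by rewrite /dotp big1 // => i _; rewrite mxE mul0r. Qed.

Lemma dotp_suml m (w : 'I_m -> R) (p : 'I_m -> 'rV[R]_n) y :
  dp (\sum_(i < m) w i *: p i) y = \sum_(i < m) w i * dp (p i) y.
Proof.
elim: m w p => [|m IH] w p; first by rewrite !big_ord0 dotp0l.
by rewrite !big_ord_recr /= dotpDl dotpZl IH.
Qed.

Lemma dotp_ge0 x : 0 <= dp x x.
Proof. by apply: sumr_ge0 => i _; rewrite -expr2 sqr_ge0. Qed.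

Lemma dotp_eq0 x : dp x x = 0 -> x = 0.
Proof.
move=> /psumr_eq0P H; apply/rowP => i; rewrite mxE.
have /eqP := H (fun j _ => ltac:(rewrite -expr2 sqr_ge0 //)) i isT.
rewrite -expr2 sqrf_eq0 => /eqP; rewrite ?ord1 //=.

Qed.

Lemma dotp_expand a b t : dp (a - t *: b) (a - t *: b) = dp a a - 2 * t * dp a b + t ^+ 2 * dp b b.
Proof. rewrite !dotpBl !dotpBr !dotpZl !dotpZr (dotpC b a); ring. Qed.

Lemma dotp_unit_sq u x : dp u u = 1 -> (dp u x) ^+ 2 <= dp x x.
Proof.
move=> uu; have := dotp_ge0 (x - dp u x *: u).
rewrite !dotpBl !dotpBr !dotpZl !dotpZr uu (dotpC x u); lra.
Qed.

Lemma dotp_unit_le u x s : dp u u = 1 -> 0 <= s -> dp x x <= s ^+ 2 -> dp u x <= s.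
Proof.
move=> uu s0 hx; have h := @dotp_unit_sq u x uu; rewrite leNgt; apply/negP => hlt.
have : s ^+ 2 < (dp u x) ^+ 2 by rewrite ltr_pXn2r // ?nnegrE // (le_trans s0 (ltW hlt)).
lra.
Qed.

End Dot.
Section Cont.
Variables (R : realType).

Lemma sum_cont (T : topologicalType) (V : normedModType R) m (F : 'I_m -> T -> V) :
  (forall i, continuous (F i)) -> continuous (fun x => \sum_(i < m) F i x).
Proof.
elim: m F => [|m IH] F H.
  by under eq_fun do rewrite big_ord0; exact: cst_continuous.
under eq_fun do rewrite big_ord_recr /=.
move=> x; apply: continuousD; first exact: (IH (fun i => F (widen_ord (leqnSn m) i))).
exact: H.
Qed.

Lemma dotp_cont (T : topologicalType) n (f g : T -> 'rV[R]_n) :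
  continuous f -> continuous g -> continuous (fun t => dotp (f t) (g t)).
Proof.
move=> cf cg; rewrite /dotp; apply: sum_cont => i x.
apply: continuousM.
  exact: (continuous_comp (cf x) (@coord_continuous R 1 n 0 i (f x))).
exact: (continuous_comp (cg x) (@coord_continuous R 1 n 0 i (g x))).
Qed.

Lemma coord_cont n (i : 'I_n) : continuous (fun w : 'rV[R]_n => w 0 i).
Proof. exact: coord_continuous. Qed.

End Cont.

Section Poly.
Variables (R : realType) (n : nat).
Local Notation dp := (@dotp R n).

Lemma polytope N (Y : 'I_N -> 'rV[R]_n) (A : set 'rV[R]_n) (s : R) (u0 : 'rV[R]_n) :
  dp u0 u0 = 1 -> 0 <= s -> (forall j, A (Y j)) ->
  (forall u, dp u u = 1 -> exists j, s < dp u (Y j)) ->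
  scaled_ball s `<=` conv A.
Proof.
move=> u00 s0 AY hyp _ [x xB ->].
set p := s *: x.
have [//|np] := pselect (conv A p).
exfalso.
have [j0 _] := hyp u0 u00.
pose W := [set w : 'rV[R]_N | (forall j, 0 <= w 0 j) /\ \sum_(j < N) w 0 j = 1].
pose Q (w : 'rV[R]_N) := \sum_(j < N) w 0 j *: Y j.
pose g w := dp (p - Q w) (p - Q w).
have W0 : W !=set0.
  exists (delta_mx 0 j0); split.
    by move=> j; rewrite mxE; case: (_ && _).
  rewrite (bigD1 j0) //= mxE !eqxx /= big1 ?addr0 // => j /negbTE jj.
  by rewrite mxE jj andbF.
have Wc : compact W.
  have Wsub : W `<=` [set v : 'rV[R]_N | forall i, `[0, 1]%classic (v ord0 i)].
    move=> v [v0 v1] i; rewrite /= in_itv /= v0 /= -v1.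
    rewrite (bigD1 i) //= lerDl; apply: sumr_ge0 => k _; exact: v0.
  have Wcl : closed W.
    have -> : W = \bigcap_(j in setT) [set w : 'rV[R]_N | 0 <= w 0 j] `&`
        ([set w | \sum_(j < N) w 0 j <= 1] `&` [set w | 1 <= \sum_(j < N) w 0 j]).
      apply/seteqP; split => w /=.
        by move=> [H1 H2]; split; [move=> j _; exact: H1|rewrite H2 lexx].
      by move=> [H1 [H2 H3]]; split; [move=> j; exact: H1|apply/eqP; rewrite eq_le H2 H3].
    apply: closedI; first apply: closed_bigI => j _.
      by apply: (@preimage_closed _ R (fun w : 'rV[R]_N => w 0 j) [set x | 0 <= x]); [move=> w _; exact: coord_cont|exact: closed_ge].
    have cs : continuous (fun w : 'rV[R]_N => \sum_(j < N) w 0 j).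
      by apply: sum_cont => j; exact: coord_cont.
    apply: closedI.
      by apply: (@preimage_closed _ R (fun w : 'rV[R]_N => \sum_(j < N) w 0 j) [set x | x <= 1]); [move=> w _; exact: cs|exact: closed_le].
    by apply: (@preimage_closed _ R (fun w : 'rV[R]_N => \sum_(j < N) w 0 j) [set x | 1 <= x]); [move=> w _; exact: cs|exact: closed_ge].
  have Bc := @rV_compact R N (fun=> `[(0:R), 1]%classic) (fun=> @segment_compact R 0 1).
  exact: (subclosed_compact Wcl Bc Wsub).
have gc : {within W, continuous g}.
  have cQ : continuous Q.
    by apply: sum_cont => j w; apply: continuousZr_tmp; exact: coord_cont.
  have cpQ : continuous (fun w => p - Q w).
    move=> w; apply: (@continuousB _ _ _ (fun=> p) Q w) => //.
    exact: cst_continuous. exact: cQ.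
  by apply: continuous_subspaceT; apply: dotp_cont.
have [w wW wmin] := EVT_min_rV W0 Wc gc.
have [w0 w1] : W w by move: wW; rewrite inE.
set q := Q w; set c := p - q.
have c0 : c != 0.
  apply/negP; rewrite /c subr_eq0 => /eqP pq; apply: np; rewrite pq.
  by exists N, (fun j => w 0 j), Y; split.
have key : forall j, dp c (Y j) <= dp c q.
  move=> j; set v := Y j - q.
  suff : dp c v <= 0 by rewrite /v dotpBr subr_le0.
  rewrite leNgt; apply/negP => cv.
  have vv0 := dotp_ge0 v.
  pose t := dp c v / (dp c v + dp v v).
  have tpos : 0 < t by rewrite divr_gt0 // ltr_wpDr.
  have t1 : t <= 1 by rewrite ler_pdivrMr ?mul1r ?lerDl // ltr_wpDr.
  pose wt := (1 - t) *: w + t *: delta_mx 0 j.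
  have wtW : wt \in W.
    rewrite inE; split.
      move=> k; rewrite !mxE; apply: addr_ge0; first by apply: mulr_ge0 => //; rewrite subr_ge0.
      by apply: mulr_ge0; [exact: ltW|case: (_ && _)].
    under eq_bigr do rewrite !mxE.
    rewrite big_split /= -!mulr_sumr w1 (bigD1 j) //= eqxx big1 /=.
      by rewrite mulr1 addr0 mulr1 subrK.
    by move=> k /negbTE ->.
  have Qwt : Q wt = q + t *: v.
    rewrite /Q; under eq_bigr do rewrite !mxE scalerDl -!scalerA.
    rewrite big_split /= -!scaler_sumr -/(Q w) -/q (bigD1 j) //= eqxx big1 /=.
      rewrite scalerA -/t scale1r addr0 /v scalerBl scale1r scalerBr.
      by rewrite addrAC -addrA.
    by move=> k /negbTE ->; rewrite scale0r.
  have := wmin _ wtW; rewrite /g Qwt.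
  have -> : p - (q + t *: v) = c - t *: v by rewrite /c opprD addrA.
  rewrite !dotp_expand => h.
  have h1 : 2 * dp c v <= t * dp v v.
    rewrite -(ler_pM2l tpos); nra.
  have h2 : t * dp v v < dp c v.
    rewrite /t mulrAC ltr_pdivrMr ?ltr_wpDr //; nra.
  lra.
have cc0 : 0 < dp c c.
  rewrite lt_def dotp_ge0 andbT; apply/eqP => /dotp_eq0 /eqP; exact/negP.
set L := Num.sqrt (dp c c).
have L0 : 0 < L by rewrite sqrtr_gt0.
have LL : dp c c = L * L by rewrite /L -expr2 sqr_sqrtr ?ltW.
pose u := L^-1 *: c.
have uu : dp u u = 1.
  rewrite /u dotpZl dotpZr LL; field; exact: lt0r_neq0.
have [j hj] := hyp u uu.
have cq : dp c c = dp c p - dp c q by rewrite -dotpBr.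
have hab : dp c (Y j) < dp c p by have := key j; lra.
have pp : dp p p <= s ^+ 2.
  rewrite /p dotpZl dotpZr; have := dotp_ge0 x; move: xB; rewrite /uball /= => xB; nra.
have up := dotp_unit_le uu s0 pp.
move: hj up; rewrite /u !dotpZl => hj up.
have : L^-1 * dp c (Y j) < L^-1 * dp c p by rewrite ltr_pM2l ?invr_gt0.
lra.
Qed.

End Poly.

Section Del.
Variables (R : realType) (n : nat).
Implicit Types X Z : set 'rV[R]_n.
Local Notation dp := (@dotp R n).

Definition DS (X : set 'rV[R]_n) : set R :=
  [set r : R | 0 <= r <= 1 /\ scaled_ball r `<=` conv (@usphere R n `\` X)].

Lemma DeltaE X : Delta X = sup (DS X). Proof. by []. Qed.

Lemma DS_sup X : DS X !=set0 -> has_sup (DS X).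
Proof. move=> ne; split => //; exists 1 => r [/andP[_ ?] _] //. Qed.

Lemma Delta_ge0 X : 0 <= Delta X.
Proof.
rewrite DeltaE; have [->|/set0P ne] := eqVneq (DS X) set0; first by rewrite sup0.
have [r Hr] := ne; apply: le_trans (sup_upper_bound (DS_sup ne) Hr).
by case: Hr => /andP[].
Qed.

Lemma conv_mono (A B : set 'rV[R]_n) : A `<=` B -> conv A `<=` conv B.
Proof.
move=> AB x [m [w [p [w0 w1 Ap ->]]]]; exists m, w, p; split => // i; exact: AB.
Qed.

Lemma Delta_mono X Z : Z `<=` X -> Delta X <= Delta Z.
Proof.
move=> ZX; rewrite DeltaE; have [->|/set0P ne] := eqVneq (DS X) set0.
  by rewrite sup0; exact: Delta_ge0.
have sub : DS X `<=` DS Z.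
  move=> r [h1 h2]; split => //; apply: subset_trans h2 _; apply: conv_mono.
  by move=> y [Sy nX]; split => // /ZX.
have [r Hr] := ne.
have neZ : DS Z !=set0 by exists r; exact: sub.
apply: ge_sup => // r' /sub Hr'; exact: (sup_upper_bound (DS_sup neZ)).

Qed.

End Del.

Section Main.
Variables (R : realType) (n : nat).
Local Notation dp := (@dotp R n).

Lemma unit_exists : (0 < n)%N -> exists u : 'rV[R]_n, dp u u = 1.
Proof.
move=> n0; exists (delta_mx 0 (Ordinal n0)); rewrite /dotp (bigD1 (Ordinal n0)) //=.
rewrite big1 ?addr0; first by rewrite mxE !eqxx mulr1.
by move=> k /negbTE kk; rewrite mxE kk andbF mul0r.
Qed.

Lemma seq_min (I : eqType) (l : seq (I * R)) :
  (forall x, x \in l -> 0 < x.2) -> exists2 e, 0 < e & forall x, x \in l -> e <= x.2.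
Proof.
elim: l => [|a l IH] H; first by exists 1.
have [e e0 He] : exists2 e, 0 < e & forall x, x \in l -> e <= x.2.
  by apply: IH => x hx; apply: H; rewrite in_cons hx orbT.
exists (Num.min a.2 e); first by rewrite lt_min e0 H ?mem_head.
move=> x; rewrite in_cons => /orP[/eqP ->|hx]; first by rewrite ge_min lexx.
by rewrite ge_min He // orbT.
Qed.

Lemma sphere_compact : compact (@usphere R n).
Proof.
have Ssub : @usphere R n `<=` [set v : 'rV[R]_n | forall i, `[-1, 1]%classic (v ord0 i)].
  move=> v Sv i; rewrite /= in_itv /= -ler_norml -(expr_le1 (n:=2)) // ?normr_ge0 //.
  rewrite -normrX ger0_norm ?sqr_ge0 // -Sv /dotp (bigD1 i) //= -expr2 lerDl.
  by apply: sumr_ge0 => k _; rewrite -expr2 sqr_ge0.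
have Scl : closed (@usphere R n).
  have -> : @usphere R n = [set v | dp v v <= 1] `&` [set v | 1 <= dp v v].
    apply/seteqP; split => v /=; rewrite /usphere /=.
      by move=> ->; rewrite lexx.
    by move=> [h1 h2]; apply/eqP; rewrite eq_le h1 h2.
  have cs : continuous (fun v : 'rV[R]_n => dp v v) by apply: dotp_cont => v; exact: cvg_id.
  apply: closedI.
    by apply: (@preimage_closed _ R (fun v : 'rV[R]_n => dp v v) [set x | x <= 1]); [move=> w _; exact: cs|exact: closed_le].
  by apply: (@preimage_closed _ R (fun v : 'rV[R]_n => dp v v) [set x | 1 <= x]); [move=> w _; exact: cs|exact: closed_ge].
have Bc := @rV_compact R n (fun=> `[(-1:R), 1]%classic) (fun=> @segment_compact R (-1) 1).
exact: (subclosed_compact Scl Bc Ssub).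
Qed.

End Main.

Unset Implicit Arguments.
Theorem lemma2 (R : realType) (n : nat) (hn : (2 <= n)%N)
  (X : set 'rV[R]_n) (hX : X `<=` @usphere R n) :
  exists (c : 'rV[R]_n) (k : R), cap c k `<=` X /\ Delta (cap c k) = Delta X.
Proof.
pose A := @usphere R n `\` X.
set d := Delta X.
have d0 : 0 <= d := Delta_ge0 X.
have [u0 u00] := @unit_exists R n (ltn_trans (ltn0Sn 0) hn).
have claim : exists c : 'rV[R]_n, dotp c c = 1 /\ forall y, A y -> dotp c y <= d.
  apply: contrapT => ncl.
  have H : forall c : 'rV[R]_n, dotp c c = 1 -> exists y, A y /\ d < dotp c y.
    move=> c cc; apply: contrapT => nE; apply: ncl; exists c; split => // y Ay.
    by rewrite leNgt; apply/negP => dy; apply: nE; exists y.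
  have Sc := @sphere_compact R n; rewrite compact_cover in Sc.
  pose I := ('rV[R]_n * R)%type.
  pose D := [set ye : I | A ye.1 /\ 0 < ye.2].
  pose f := fun ye : I => [set c : 'rV[R]_n | d + ye.2 < dotp c ye.1].
  have [D' D'D SD'] : finite_subset_cover D f (@usphere R n).
    apply: Sc.
  - move=> [y e] _.
    apply: (@open_comp _ R (fun c => dotp c y) [set x | d + e < x]); last exact: open_gt.
    have cy : continuous (fun c : 'rV[R]_n => dotp c y).
      by apply: dotp_cont; [move=> ?; exact: cvg_id|exact: cst_continuous].
    by move=> v _; exact: cy.
  - move=> c Sc'; have [y [Ay dy]] := H c Sc'.
    exists (y, (dotp c y - d) / 2); first by split => //=; rewrite divr_gt0 // subr_gt0.
    rewrite /f /=; lra.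
  pose l : seq I := finmap.enum_fset D'.
  have lD : forall x, x \in l -> D x.
    by move=> x hx; have := D'D x; move/(_ hx); rewrite inE.
  have [e0 e00 He0] := @seq_min R _ l (fun x hx => (lD x hx).2).
  pose N := size l.
  pose Y := fun j : 'I_N => (nth (0, 0) l j).1.
  have AY : forall j, A (Y j) by move=> j; apply: (lD _ (mem_nth _ (ltn_ord j))).1.
  pose s := d + e0.
  have hyp : forall u : 'rV[R]_n, dotp u u = 1 -> exists j, s < dotp u (Y j).
    move=> u uu; have [ye yeD' hye] := SD' u uu.
    have yel : ye \in l by [].
    have iN : (index ye l < N)%N by rewrite index_mem.
    exists (Ordinal iN).
    rewrite /Y /= nth_index // /s; have := He0 ye yel; move: hye; rewrite /f /=; lra.
  have s1 : s <= 1.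
    have [j hj] := hyp u0 u00.
    have [SY _] := AY j.
    have := @dotp_unit_le R n u0 (Y j) 1 u00 ler01; rewrite expr1n SY lexx => /(_ isT).
    lra.
  have sB := @polytope R n N Y A s u0 u00 (ltW (ltr_pwDr e00 d0)) AY hyp.
  have sDS : DS X s by split => //; rewrite s1 andbT ltW // ltr_pwDr.
  have := sup_upper_bound (DS_sup (ex_intro _ s sDS)) sDS.
  rewrite -DeltaE -/d /s; lra.
have [c [cc cA]] := claim.
have capX : cap c d `<=` X.
  move=> x [Sx dx]; have [//|nX] := pselect (X x).
  by have := cA x (conj Sx nX); rewrite leNgt dx.
exists c, d; split => //.
apply/eqP; rewrite eq_le; apply/andP; split; last exact: Delta_mono.
rewrite DeltaE; have [->|/set0P ne] := eqVneq (DS (cap c d)) set0; first by rewrite sup0.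
apply: ge_sup => // r [/andP[r0 r1] rB].
rewrite leNgt; apply/negP => dr.
have : conv (@usphere R n `\` cap c d) (r *: c).
  by apply: rB; exists c => //; rewrite /uball /= cc.
move=> [m [w [p [w0 w1 Ap E]]]].
have : dotp (r *: c) c <= d.
  rewrite E dotp_suml -[d]mul1r -w1 mulr_suml; apply: ler_sum => i _.
  apply: ler_wpM2l => //; have [Sp ncap] := Ap i.
  by rewrite dotpC leNgt; apply/negP => h; apply: ncap.
by rewrite dotpZl cc mulr1 leNgt dr.
Qed.
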